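(* Suppose $\mathit{Act}$ is infinite. Then $\mathcal{E}_v'$ is complete for $\simeq_\omega$ over open monitors: for all monitors $m,n$, if $m\simeq_\omega n$ then $\mathcal{E}_v'\vdash m=n$.
   Context: Monitors: terms $m,n ::= v \mid a.m \mid m+n \mid x$ over an action set $\mathit{Act}$ and variables $x$, verdicts $v::=\mathit{end}\mid\mathit{yes}\mid\mathit{no}$; closed monitors contain no variables. Transitions $\xrightarrow{\alpha}$, $\alpha\in\mathit{Act}\cup\{\tau\}$ ($\tau\notin\mathit{Act}$): least relation with $a.m\xrightarrow{a}m$; $m\xrightarrow{\alpha}m'$ implies $m+n\xrightarrow{\alpha}m'$ and $n+m\xrightarrow{\alpha}m'$; $v\xrightarrow{\alpha}v$ for each verdict $v$. Weak transitions: $m\xRightarrow{\varepsilon}m'$ iff $m(\xrightarrow{\tau})^*m'$; $m\xRightarrow{a}m'$ iff $m\xRightarrow{\varepsilon}\xrightarrow{a}\xRightarrow{\varepsilon}m'$; $m\xRightarrow{as'}m'$ ($s'\neq\varepsilon$) iff $m\xRightarrow{a}m_1\xRightarrow{s'}m'$. For closed $m$: $L_a(m)=\{s\mid m\xRightarrow{s}\mathit{yes}\}$, $L_r(m)=\{s\mid m\xRightarrow{s}\mathit{no}\}$; closed $m\simeq_\omega n$ iff $L_a(m)\cdot\mathit{Act}^\omega=L_a(n)\cdot\mathit{Act}^\omega$ and $L_r(m)\cdot\mathit{Act}^\omega=L_r(n)\cdot\mathit{Act}^\omega$; for open monitors $m\simeq_\omega n$ iff $\sigma(m)\simeq_\omega\sigma(n)$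 for all closed substitutions $\sigma$. $\mathcal{E}\vdash m=n$ denotes derivability by the rules of equational logic. $\mathcal{E}_v'$ consists of (A1) $x+y=y+x$; (A2) $x+(y+z)=(x+y)+z$; (A3) $x+x=x$; (A4) $x+\mathit{end}=x$; for each $a\in\mathit{Act}$: ($E_a$) $a.\mathit{end}=\mathit{end}$; ($Y_a$) $\mathit{yes}=\mathit{yes}+a.\mathit{yes}$; ($N_a$) $\mathit{no}=\mathit{no}+a.\mathit{no}$; ($D_a$) $a.(x+y)=a.x+a.y$; and (O1) $\mathit{yes}+\mathit{no}=\mathit{yes}+\mathit{no}+x$. *)

(* Defs.v *)
From Stdlib Require Import List Relations Arith.
Import ListNotations.

Set Implicit Arguments.

Inductive verdict : Type := vend | vyes | vno.

Inductive mon (A : Type) : Type :=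
| Verd : verdict -> mon A
| Pre  : A -> mon A -> mon A
| Sum  : mon A -> mon A -> mon A
| Var  : nat -> mon A.
Arguments Verd {A} _.
Arguments Var {A} _.

Section Monitors.
Variable A : Type.

(* labels: Some a = action a, None = tau *)
Inductive step : mon A -> option A -> mon A -> Prop :=
| st_pre  : forall a m, step (Pre a m) (Some a) m
| st_suml : forall m n al m', step m al m' -> step (Sum m n) al m'
| st_sumr : forall m n al m', step m al m' -> step (Sum n m) al m'
| st_verd : forall v al, step (Verd v) al (Verd v).

Definition tau_star : mon A -> mon A -> Prop :=
  clos_refl_trans (mon A) (fun m m' => step m None m').

Definition wstep (m : mon A) (a : A) (m' : mon A) : Prop :=
  exists m1 m2, tau_star m m1 /\ step m1 (Some a) m2 /\ tau_star m2 m'.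

Fixpoint wtrace (m : mon A) (s : list A) (m' : mon A) : Prop :=
  match s with
  | [] => tau_star m m'
  | [a] => wstep m a m'
  | a :: s' => exists m1, wstep m a m1 /\ wtrace m1 s' m'
  end.

Fixpoint closed (m : mon A) : Prop :=
  match m with
  | Verd _ => True
  | Pre _ m => closed m
  | Sum m n => closed m /\ closed n
  | Var _ => False
  end.

Definition La (m : mon A) : list A -> Prop := fun s => wtrace m s (Verd vyes).
Definition Lr (m : mon A) : list A -> Prop := fun s => wtrace m s (Verd vno).

Definition omega_word := nat -> A.

Definition is_prefix (s : list A) (w : omega_word) : Prop :=
  forall i, i < length s -> nth_error s i = Some (w i).

Definition ext (L : list A -> Prop) (w : omega_word) : Prop :=
  exists s, L s /\ is_prefix s w.

Definition omega_eq_closed (m n : mon A) : Prop :=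
  (forall w, ext (La m) w <-> ext (La n) w) /\
  (forall w, ext (Lr m) w <-> ext (Lr n) w).

Fixpoint subst (sigma : nat -> mon A) (m : mon A) : mon A :=
  match m with
  | Verd v => Verd v
  | Pre a m => Pre a (subst sigma m)
  | Sum m n => Sum (subst sigma m) (subst sigma n)
  | Var x => sigma x
  end.

Definition omega_eq (m n : mon A) : Prop :=
  forall sigma : nat -> mon A, (forall x, closed (sigma x)) ->
    omega_eq_closed (subst sigma m) (subst sigma n).

(* The axiom system E_v' ; x, y, z are Var 0, Var 1, Var 2 *)
Inductive Ev' : mon A -> mon A -> Prop :=
| A1 : Ev' (Sum (Var 0) (Var 1)) (Sum (Var 1) (Var 0))
| A2 : Ev' (Sum (Var 0) (Sum (Var 1) (Var 2))) (Sum (Sum (Var 0) (Var 1)) (Var 2))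
| A3 : Ev' (Sum (Var 0) (Var 0)) (Var 0)
| A4 : Ev' (Sum (Var 0) (Verd vend)) (Var 0)
| Ea : forall a, Ev' (Pre a (Verd vend)) (Verd vend)
| Ya : forall a, Ev' (Verd vyes) (Sum (Verd vyes) (Pre a (Verd vyes)))
| Na : forall a, Ev' (Verd vno) (Sum (Verd vno) (Pre a (Verd vno)))
| Da : forall a, Ev' (Pre a (Sum (Var 0) (Var 1))) (Sum (Pre a (Var 0)) (Pre a (Var 1)))
| O1 : Ev' (Sum (Verd vyes) (Verd vno)) (Sum (Sum (Verd vyes) (Verd vno)) (Var 0)).

Inductive derivable (E : mon A -> mon A -> Prop) : mon A -> mon A -> Prop :=
| d_ax    : forall l r (sigma : nat -> mon A), E l r ->
              derivable E (subst sigma l) (subst sigma r)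
| d_refl  : forall m, derivable E m m
| d_sym   : forall m n, derivable E m n -> derivable E n m
| d_trans : forall m n p, derivable E m n -> derivable E n p -> derivable E m p
| d_pre   : forall a m n, derivable E m n -> derivable E (Pre a m) (Pre a n)
| d_sum   : forall m m' n n', derivable E m m' -> derivable E n n' ->
              derivable E (Sum m n) (Sum m' n').

End Monitors.

(* Main.v *)
Require Import Defs.
From Stdlib Require Import List Relations Arith Lia Classical.
Import ListNotations.
Set Implicit Arguments.

Section S.
Variable A : Type.
Notation D := (derivable (@Ev' A)).
Notation M := (mon A).

Definition sub3 (X Y Z : M) : nat -> M :=
  fun n => match n with 0 => X | 1 => Y | _ => Z end.

Lemma Dsym (X Y : M) : D X Y -> D Y X. Proof. apply d_sym. Qed.
Lemma Dtr (X Y Z : M) : D X Y -> D Y Z -> D X Z. Proof. apply d_trans. Qed.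
Lemma Drefl (X : M) : D X X. Proof. apply d_refl. Qed.
Lemma Dcomm (X Y : M) : D (Sum X Y) (Sum Y X).
Proof. exact (@d_ax A _ _ _ (sub3 X Y X) (A1 A)). Qed.
Lemma Dassoc (X Y Z : M) : D (Sum X (Sum Y Z)) (Sum (Sum X Y) Z).
Proof. exact (@d_ax A _ _ _ (sub3 X Y Z) (A2 A)). Qed.
Lemma Didem (X : M) : D (Sum X X) X.
Proof. exact (@d_ax A _ _ _ (sub3 X X X) (A3 A)). Qed.
Lemma Dendr (X : M) : D (Sum X (Verd vend)) X.
Proof. exact (@d_ax A _ _ _ (sub3 X X X) (A4 A)). Qed.
Lemma Dendl (X : M) : D (Sum (Verd vend) X) X.
Proof. eapply Dtr. apply Dcomm. apply Dendr. Qed.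
Lemma DE a : D (Pre a (Verd vend)) (Verd vend).
Proof. exact (@d_ax A _ _ _ (sub3 (Verd vend) (Verd vend) (Verd vend)) (Ea a)). Qed.
Lemma DY a : D (Verd vyes) (Sum (Verd vyes) (Pre a (Verd vyes))).
Proof. exact (@d_ax A _ _ _ (sub3 (Verd vend) (Verd vend) (Verd vend)) (Ya a)). Qed.
Lemma DN a : D (Verd vno) (Sum (Verd vno) (Pre a (Verd vno))).
Proof. exact (@d_ax A _ _ _ (sub3 (Verd vend) (Verd vend) (Verd vend)) (Na a)). Qed.
Lemma DD a (X Y : M) : D (Pre a (Sum X Y)) (Sum (Pre a X) (Pre a Y)).
Proof. exact (@d_ax A _ _ _ (sub3 X Y X) (Da a)). Qed.
Lemma DO (X : M) : D (Sum (Verd vyes) (Verd vno)) (Sum (Sum (Verd vyes) (Verd vno)) X).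
Proof. exact (@d_ax A _ _ _ (sub3 X X X) (O1 A)). Qed.
Lemma Dsum (X X' Y Y' : M) : D X X' -> D Y Y' -> D (Sum X Y) (Sum X' Y').
Proof. apply d_sum. Qed.
Lemma Dpre a (X Y : M) : D X Y -> D (Pre a X) (Pre a Y).
Proof. apply d_pre. Qed.

Definition pre_s (s : list A) (X : M) : M := fold_right (fun a m => Pre a m) X s.
Definition pth (p : list A * M) : M := pre_s (fst p) (snd p).
Definition nf (L : list (list A * M)) : M :=
  fold_right (fun p acc => Sum (pth p) acc) (Verd vend) L.

Fixpoint paths (m : M) : list (list A * M) :=
  match m with
  | Verd vend => []
  | Verd v => [([], Verd v)]
  | Var x => [([], Var x)]
  | Pre a m => map (fun p => (a :: fst p, snd p)) (paths m)
  | Sum m n => paths m ++ paths n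
  end.

Lemma nf_app L1 L2 : D (nf (L1 ++ L2)) (Sum (nf L1) (nf L2)).
Proof.
  induction L1 as [|p L1 IH]; simpl.
  - apply Dsym, Dendl.
  - eapply Dtr. apply Dsum. apply Drefl. exact IH. apply Dassoc.
Qed.

Lemma nf_pre a L : D (nf (map (fun p => (a :: fst p, snd p)) L)) (Pre a (nf L)).
Proof.
  induction L as [|p L IH]; simpl.
  - apply Dsym, DE.
  - eapply Dtr. apply Dsum. apply Drefl. exact IH. apply Dsym, DD.
Qed.

Lemma nf_paths m : D m (nf (paths m)).
Proof.
  induction m as [v|a m IH|m IHm n IHn|x]; simpl.
  - destruct v; simpl. apply Drefl. apply Dsym, Dendr. apply Dsym, Dendr.
  - eapply Dtr. apply Dpre, IH. apply Dsym, nf_pre.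
  - eapply Dtr. apply Dsum; eassumption. apply Dsym, nf_app.
  - apply Dsym, Dendr.
Qed.

Definition ge (X P : M) := D (Sum X P) X.

Lemma ge_eqv (X P : M) : D X P -> ge X P.
Proof. intro H. unfold ge. eapply Dtr. apply Dsum. apply Drefl. apply Dsym, H. apply Didem. Qed.

Lemma ge_trans X Q P : ge X Q -> ge Q P -> ge X P.
Proof.
  unfold ge; intros H1 H2.
  eapply Dtr. apply Dsum. apply Dsym, H1. apply Drefl.
  eapply Dtr. apply Dsym, Dassoc.
  eapply Dtr. apply Dsum. apply Drefl. apply H2. exact H1.
Qed.

Lemma ge_sum X P Q : ge X P -> ge X Q -> ge X (Sum P Q).
Proof.
  unfold ge; intros H1 H2.
  eapply Dtr. apply Dassoc.
  eapply Dtr. apply Dsum. apply H1. apply Drefl. exact H2.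
Qed.

Lemma ge_in p L : In p L -> ge (nf L) (pth p).
Proof.
  unfold ge. induction L as [|q L IH]; simpl; intros H. destruct H.
  destruct H as [->|H].
  - eapply Dtr. apply Dsym, Dassoc.
    eapply Dtr. apply Dsum. apply Drefl. apply Dcomm.
    eapply Dtr. apply Dassoc. apply Dsum. apply Didem. apply Drefl.
  - eapply Dtr. apply Dsym, Dassoc. apply Dsum. apply Drefl. apply IH, H.
Qed.

Lemma ge_nf X L : (forall p, In p L -> ge X (pth p)) -> ge X (nf L).
Proof.
  induction L as [|q L IH]; simpl; intros H.
  - apply Dendr.
  - apply ge_sum. apply H; auto. apply IH; auto.
Qed.

Lemma pre_s_sum s (X Y : M) : D (pre_s s (Sum X Y)) (Sum (pre_s s X) (pre_s s Y)).
Proof.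
  induction s as [|a s IH]; simpl. apply Drefl.
  eapply Dtr. apply Dpre, IH. apply DD.
Qed.

Lemma ge_pre_s s X Y : ge X Y -> ge (pre_s s X) (pre_s s Y).
Proof.
  unfold ge; intro H. eapply Dtr. apply Dsym, pre_s_sum.
  induction s as [|a s IH]; simpl. exact H. apply Dpre, IH.
Qed.

Lemma ge_v v u : v <> vend -> ge (Verd v) (pre_s u (Verd v)).
Proof.
  intro Hv. unfold ge.
  assert (Hax : forall a, D (Verd v) (Sum (Verd v) (Pre a (Verd v)))).
  { destruct v; [congruence| apply DY | apply DN]. }
  induction u as [|a u IH]; simpl. apply Didem.
  apply Dsym. eapply Dtr. apply (Hax a).
  eapply Dtr. apply Dsum. apply Drefl. apply Dpre, Dsym, IH.
  eapply Dtr. apply Dsum. apply Drefl. apply DD.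
  eapply Dtr. apply Dassoc. apply Dsum. apply Dsym, Hax. apply Drefl.
Qed.

Lemma ge_O (X : M) : ge (Sum (Verd vyes) (Verd vno)) X.
Proof. apply Dsym, DO. Qed.


Inductive acc : M -> list A -> verdict -> Prop :=
| acc_verd : forall v s, acc (Verd v) s v
| acc_pre : forall a m s v, acc m s v -> acc (Pre a m) (a :: s) v
| acc_suml : forall m n s v, acc m s v -> acc (Sum m n) s v
| acc_sumr : forall m n s v, acc n s v -> acc (Sum m n) s v.

Lemma wtrace_cons (m m' : M) a s :
  wtrace m (a :: s) m' <-> exists m1, wstep m a m1 /\ wtrace m1 s m'.
Proof.
  destruct s as [|b s]; [|simpl; tauto].
  simpl. split.
  - intro H. exists m'. split. exact H. apply rt_refl.
  - intros [m1 [[x [y [H1 [H2 H3]]]] H4]]. exists x, y. split; [exact H1|split; [exact H2|]].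
    eapply rt_trans; eassumption.
Qed.

Definition ocons (al : option A) (s : list A) :=
  match al with None => s | Some a => a :: s end.

Lemma step_acc (m m' : M) al : step m al m' -> forall s v, acc m' s v -> acc m (ocons al s) v.
Proof.
  induction 1; intros s w Hacc; simpl.
  - constructor; auto.
  - apply acc_suml; auto.
  - apply acc_sumr; auto.
  - inversion Hacc; subst. constructor.
Qed.

Lemma tau_acc (m m' : M) : tau_star m m' -> forall s v, acc m' s v -> acc m s v.
Proof.
  induction 1; intros; auto.
  apply (step_acc H H0).
Qed.

Lemma wtrace_acc s : forall (m m' : M), wtrace m s m' -> forall r v, acc m' r v -> acc m (s ++ r) v.
Proof.
  induction s as [|a s IH]; intros m m' H r v Hacc.
  - simpl in *. eapply tau_acc; eauto.
  - apply wtrace_cons in H. destruct H as [m1 [[x [y [H1 [H2 H3]]]] H4]].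
    eapply tau_acc. exact H1.
    change (acc x (ocons (Some a) (s ++ r)) v). apply (step_acc H2).
    eapply tau_acc. exact H3. eapply IH; eauto.
Qed.

Lemma verd_trace v s : wtrace (Verd v : M) s (Verd v).
Proof.
  induction s as [|a s IH]. apply rt_refl.
  apply wtrace_cons. exists (Verd v). split; auto.
  exists (Verd v), (Verd v). split. apply rt_refl. split. constructor. apply rt_refl.
Qed.

Lemma tau_step_sum (m x y n : M) al : tau_star m x -> step x al y ->
  exists z, tau_star (Sum m n) z /\ step z al y.
Proof.
  intros H1 H2. apply clos_rt_rt1n in H1. destruct H1 as [|y0 z H H'].
  - exists (Sum m n). split. apply rt_refl. constructor; auto.
  - exists z. split; auto. eapply rt_trans. apply rt_step. apply st_suml. exact H.
    apply clos_rt1n_rt; auto.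
Qed.

Lemma tau_step_sumr (m x y n : M) al : tau_star m x -> step x al y ->
  exists z, tau_star (Sum n m) z /\ step z al y.
Proof.
  intros H1 H2. apply clos_rt_rt1n in H1. destruct H1 as [|y0 z H H'].
  - exists (Sum n m). split. apply rt_refl. apply st_sumr; auto.
  - exists z. split; auto. eapply rt_trans. apply rt_step. apply st_sumr. exact H.
    apply clos_rt1n_rt; auto.
Qed.

Lemma trace_sum (m n : M) s v : wtrace m s (Verd v) ->
  wtrace (Sum m n) s (Verd v) /\ wtrace (Sum n m) s (Verd v).
Proof.
  destruct s as [|a s].
  - simpl. intro H. apply clos_rt_rt1n in H. inversion H; subst.
    + split; apply rt_step; [apply st_suml|apply st_sumr]; constructor.
    + split; (eapply rt_trans; [apply rt_step|apply clos_rt1n_rt; exact H1]); [apply st_suml|apply st_sumr]; exact H0.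
  - intro H. apply wtrace_cons in H. destruct H as [m1 [[x [y [H1 [H2 H3]]]] H4]].
    split; apply wtrace_cons; exists m1; split; auto.
    + destruct (tau_step_sum n H1 H2) as [z [Hz1 Hz2]]. exists z, y. auto.
    + destruct (tau_step_sumr n H1 H2) as [z [Hz1 Hz2]]. exists z, y. auto.
Qed.

Lemma acc_wtrace (m : M) s v : acc m s v -> wtrace m s (Verd v).
Proof.
  induction 1.
  - apply verd_trace.
  - apply wtrace_cons. exists m. split; auto. exists (Pre a m), m.
    split. apply rt_refl. split. constructor. apply rt_refl.
  - exact (proj1 (@trace_sum _ n _ _ IHacc)).
  - exact (proj2 (@trace_sum _ m _ _ IHacc)).
Qed.

Lemma acc_iff (m : M) s v : wtrace m s (Verd v) <-> acc m s v.
Proof.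
  split. intro H. rewrite <- (app_nil_r s). eapply wtrace_acc. exact H. constructor.
  apply acc_wtrace.
Qed.

Lemma acc_subst_paths (sigma : nat -> M) w : w <> vend -> forall m p,
  acc (subst sigma m) p w <-> exists s e r, In (s, e) (paths m) /\ p = s ++ r /\ acc (subst sigma e) r w.
Proof.
  intros Hv m. induction m as [vv|a m IH|m IHm n IHn|x]; intro p.
  - destruct vv; simpl.
    + split. intro H. inversion H; subst; congruence. intros (s & e & r & [] & _).
    + split. intro H. exists [], (Verd vyes), p. simpl; auto.
      intros (s & e & r & [H|[]] & H2 & H3). inversion H; subst. exact H3.
    + split. intro H. exists [], (Verd vno), p. simpl; auto.
      intros (s & e & r & [H|[]] & H2 & H3). inversion H; subst. exact H3.
  - simpl. split.
    + intro H. inversion H; subst. apply IH in H4. destruct H4 as (s0 & e & r & H1 & H2 & H3).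
      exists (a :: s0), e, r. split. apply in_map_iff. exists (s0, e). auto. subst. auto.
    + intros (s & e & r & H1 & H2 & H3). apply in_map_iff in H1.
      destruct H1 as [[s' e'] [Heq Hin]]. simpl in Heq. inversion Heq; subst.
      simpl. constructor. apply IH. eexists _, _, r. split; [eassumption|auto].
  - simpl. split.
    + intro H. inversion H; subst.
      * apply IHm in H4. destruct H4 as (s0 & e & r & H1 & H2 & H3). exists s0, e, r.
        rewrite in_app_iff; auto.
      * apply IHn in H4. destruct H4 as (s0 & e & r & H1 & H2 & H3). exists s0, e, r.
        rewrite in_app_iff; auto.
    + intros (s & e & r & H1 & H2 & H3). apply in_app_iff in H1. destruct H1 as [H1|H1].
      * apply acc_suml, IHm. exists s, e, r; auto.
      * apply acc_sumr, IHn. exists s, e, r; auto.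
  - simpl. split.
    + intro H. exists [], (Var x), p. simpl; auto.
    + intros (s & e & r & [H|[]] & H2 & H3). inversion H; subst. exact H3.
Qed.

Fixpoint letters (m : M) : list A :=
  match m with Pre a m => a :: letters m | Sum m n => letters m ++ letters n | _ => [] end.

Lemma paths_letters (m : M) s e : In (s, e) (paths m) -> incl s (letters m).
Proof.
  revert s e. induction m as [vv|a m IH|m IHm n IHn|x]; simpl; intros s e H.
  - destruct vv; simpl in H; [destruct H| |]; destruct H as [H|[]]; inversion H; subst; apply incl_nil_l.
  - apply in_map_iff in H. destruct H as [[s' e'] [Heq Hin]]. inversion Heq; subst.
    apply incl_cons. left; auto. apply incl_tl. eapply IH; eauto.
  - apply in_app_iff in H. destruct H as [H|H].
    apply incl_appl. eapply IHm; eauto. apply incl_appr. eapply IHn; eauto.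
  - destruct H as [H|[]]. inversion H; subst. apply incl_nil_l.
Qed.

Lemma paths_end (m : M) s e : In (s, e) (paths m) ->
  e = Verd vyes \/ e = Verd vno \/ exists x, e = Var x.
Proof.
  revert s e. induction m as [vv|a m IH|m IHm n IHn|x]; simpl; intros s e H.
  - destruct vv; simpl in H; [destruct H| |]; destruct H as [H|[]]; inversion H; subst; auto.
  - apply in_map_iff in H. destruct H as [[s' e'] [Heq Hin]]. inversion Heq; subst. eauto.
  - apply in_app_iff in H. destruct H; eauto.
  - destruct H as [H|[]]. inversion H; subst. eauto.
Qed.


Lemma fresh_of_inj (f : nat -> A) : (forall i j, f i = f j -> i = j) ->
  forall l : list A, exists c, ~ In c l.
Proof.
  intros Hf l. apply NNPP. intro H.
  assert (Hall : forall c, In c l).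
  { intro c. apply NNPP. intro Hc. apply H. exists c. exact Hc. }
  assert (Hle : length (map f (seq 0 (S (length l)))) <= length l).
  { apply NoDup_incl_length.
    - apply NoDup_map_NoDup_ForallPairs. intros x y _ _. apply Hf. apply seq_NoDup.
    - intros c _. apply Hall. }
  rewrite length_map, length_seq in Hle. lia.
Qed.

Lemma is_prefix_app (t r : list A) w : is_prefix (t ++ r) w -> is_prefix t w.
Proof.
  intros H i Hi. rewrite <- (nth_error_app1 t r Hi). apply H.
  rewrite length_app. lia.
Qed.

Lemma prefix_fresh (t : list A) : forall s c, is_prefix t (fun i => nth i s c) -> ~ In c t ->
  exists u, s = t ++ u.
Proof.
  induction t as [|a t IH]; intros s c H Hc.
  - exists s. reflexivity.
  - assert (H0 := H 0 ltac:(simpl; lia)). simpl in H0.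
    destruct s as [|a' s]. simpl in H0. inversion H0; subst. exfalso; apply Hc; left; auto.
    inversion H0; subst.
    destruct (IH s c) as [u Hu].
    + intros i Hi. apply (H (S i)). simpl. lia.
    + intro; apply Hc; right; auto.
    + exists u. simpl. rewrite Hu. reflexivity.
Qed.

Lemma is_prefix_nth (s : list A) c : is_prefix s (fun i => nth i s c).
Proof. intros i Hi. apply nth_error_nth'. exact Hi. Qed.

Lemma nth_snoc (s : list A) b : forall i, nth i (s ++ [b]) b = nth i s b.
Proof.
  induction s as [|a s IH]; intro i.
  - destruct i as [|[|i]]; reflexivity.
  - destruct i; simpl; auto.
Qed.

Lemma nth_len (t u : list A) a d : nth (length t) (t ++ a :: u) d = a.
Proof. induction t; simpl; auto. Qed.

Lemma nth_error_len (t u : list A) a : nth_error (t ++ a :: u) (length t) = Some a.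
Proof. induction t; simpl; auto. Qed.

Lemma omega_eq_v (m n : M) v : omega_eq m n -> v <> vend ->
  forall sigma, (forall x, closed (sigma x)) -> forall w,
  ext (fun s => wtrace (subst sigma m) s (Verd v)) w <-> ext (fun s => wtrace (subst sigma n) s (Verd v)) w.
Proof.
  intros H Hv sigma Hs w. destruct (H sigma Hs) as [H1 H2].
  destruct v; [congruence | apply H1 | apply H2].
Qed.

Section Fresh.
Hypothesis Hfr : forall l : list A, exists c, ~ In c l.

Lemma verd_case (m n : M) v s : omega_eq m n -> v <> vend -> In (s, Verd v) (paths n) ->
  exists t u, In (t, Verd v) (paths m) /\ s = t ++ u.
Proof.
  intros H Hv Hin.
  destruct (Hfr (letters m)) as [c Hc].
  set (sigma := fun _ : nat => (Verd vend : M)).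
  assert (Hs : forall x, closed (sigma x)) by (intro; exact I).
  set (w := fun i => nth i s c).
  assert (Hn : ext (fun s0 => wtrace (subst sigma n) s0 (Verd v)) w).
  { exists s. split. apply acc_iff. apply acc_subst_paths; auto.
    exists s, (Verd v), []. rewrite app_nil_r. split; auto. split; auto. constructor.
    apply is_prefix_nth. }
  apply (omega_eq_v H Hv sigma Hs) in Hn. destruct Hn as [p [Hp Hpre]].
  apply acc_iff in Hp. apply acc_subst_paths in Hp; auto.
  destruct Hp as (t & e & r & Hin' & -> & Hacc).
  destruct (paths_end _ _ _ Hin') as [->|[->|[x ->]]]; simpl in Hacc; inversion Hacc; subst;
    try congruence.
  - destruct (@prefix_fresh t s c) as [u Hu]. eapply is_prefix_app; exact Hpre.
    intro Hct. apply Hc. eapply paths_letters; eauto. exists t, u. auto.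
  - destruct (@prefix_fresh t s c) as [u Hu]. eapply is_prefix_app; exact Hpre.
    intro Hct. apply Hc. eapply paths_letters; eauto. exists t, u. auto.
Qed.

Lemma var_case (m n : M) v s x : omega_eq m n -> v <> vend -> In (s, Var x) (paths n) ->
  ~ (exists t u, In (t, Verd v) (paths m) /\ s = t ++ u) ->
  In (s, Var x) (paths m).
Proof.
  intros H Hv Hin Hno.
  destruct (Hfr (letters m ++ s)) as [b Hb].
  set (sigma := fun y => if Nat.eqb y x then Pre b (Verd v) else (Verd vend : M)).
  assert (Hs : forall y, closed (sigma y)).
  { intro y. unfold sigma. destruct (Nat.eqb y x); exact I. }
  set (w := fun i => nth i s b).
  assert (Hn : ext (fun s0 => wtrace (subst sigma n) s0 (Verd v)) w).
  { exists (s ++ [b]). split. apply acc_iff. apply acc_subst_paths; auto.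
    exists s, (Var x), [b]. split; auto. split; auto. simpl. unfold sigma.
    rewrite Nat.eqb_refl. constructor. constructor.
    intros i Hi. rewrite (nth_error_nth' _ b Hi). unfold w. rewrite nth_snoc. reflexivity. }
  apply (omega_eq_v H Hv sigma Hs) in Hn. destruct Hn as [p [Hp Hpre]].
  apply acc_iff in Hp. apply acc_subst_paths in Hp; auto.
  destruct Hp as (t & e & r & Hin' & -> & Hacc).
  assert (Htb : ~ In b t).
  { intro Hbt. apply Hb. apply in_app_iff. left. eapply paths_letters; eauto. }
  destruct (paths_end _ _ _ Hin') as [->|[->|[y ->]]]; simpl in Hacc.
  - inversion Hacc; subst. exfalso. apply Hno. 
    destruct (@prefix_fresh t s b) as [u Hu]. eapply is_prefix_app; exact Hpre. exact Htb.
    exists t, u. auto.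
  - inversion Hacc; subst. exfalso. apply Hno. 
    destruct (@prefix_fresh t s b) as [u Hu]. eapply is_prefix_app; exact Hpre. exact Htb.
    exists t, u. auto.
  - unfold sigma in Hacc. destruct (Nat.eqb y x) eqn:Hyx.
    apply Nat.eqb_eq in Hyx. subst y.
    + inversion Hacc; subst.
      destruct (@prefix_fresh t s b) as [u Hu].
      eapply is_prefix_app; exact Hpre. exact Htb.
      destruct u as [|a u].
      * rewrite app_nil_r in Hu. subst. exact Hin'.
      * exfalso. assert (Hl := Hpre (length t)).
        rewrite nth_error_len in Hl. unfold w in Hl. rewrite Hu, nth_len in Hl.
        assert (Hlt : length t < length (t ++ b :: s0)) by (rewrite length_app; simpl; lia).
        specialize (Hl Hlt). injection Hl as Hab. subst a.
        apply Hb. apply in_app_iff. right. rewrite Hu. apply in_app_iff. right. left. auto.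
    + inversion Hacc; subst. congruence.
Qed.

Lemma from_prefix (m : M) v t u : v <> vend -> In (t, Verd v) (paths m) ->
  ge (nf (paths m)) (pre_s (t ++ u) (Verd v)).
Proof.
  intros Hv Hin. eapply ge_trans. apply (ge_in _ _ Hin).
  unfold pth, pre_s; simpl. rewrite fold_right_app. apply ge_pre_s. apply ge_v. exact Hv.
Qed.

Lemma absorb (m n : M) : omega_eq m n -> forall p, In p (paths n) -> ge (nf (paths m)) (pth p).
Proof.
  intros H [s e] Hin. unfold pth; simpl.
  destruct (paths_end _ _ _ Hin) as [->|[->|[x ->]]].
  - destruct (@verd_case m n vyes s H ltac:(discriminate) Hin) as (t & u & Ht & ->).
    apply from_prefix; auto; discriminate.
  - destruct (@verd_case m n vno s H ltac:(discriminate) Hin) as (t & u & Ht & ->).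
    apply from_prefix; auto; discriminate.
  - destruct (classic (exists t u, In (t, Verd vyes) (paths m) /\ s = t ++ u)) as [Hy|Hy].
    + destruct (classic (exists t u, In (t, Verd vno) (paths m) /\ s = t ++ u)) as [Hnn|Hnn].
      * destruct Hy as (t & u & Ht & Hs). destruct Hnn as (t' & u' & Ht' & Hs').
        apply (@ge_trans _ (Sum (pre_s s (Verd vyes)) (pre_s s (Verd vno))) _). apply ge_sum.
        -- rewrite Hs. apply (@from_prefix m vyes t u); auto; discriminate.
        -- rewrite Hs'. apply (@from_prefix m vno t' u'); auto; discriminate.
        -- eapply ge_trans. apply ge_eqv. apply Dsym. apply pre_s_sum.
           apply ge_pre_s. apply ge_O.
      * apply (ge_in (s, Var x)). eapply var_case; eauto. discriminate.
    + apply (ge_in (s, Var x)). eapply var_case; eauto. discriminate.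
Qed.

End Fresh.

End S.

Theorem mainTheorem10 (Act : Type)
  (Hinf : exists f : nat -> Act, forall i j, f i = f j -> i = j) :
  forall m n : mon Act, omega_eq m n -> derivable (@Ev' Act) m n.
Proof.
  destruct Hinf as [f Hf]. pose proof (fresh_of_inj f Hf) as Hfr.
  intros m n H.
  assert (H' : omega_eq n m).
  { intros sigma Hs. destruct (H sigma Hs) as [H1 H2]. split; intro w;
    [specialize (H1 w)|specialize (H2 w)]; tauto. }
  assert (G1 : ge (nf (paths m)) (nf (paths n))) by (apply ge_nf; apply (absorb Hfr H)).
  assert (G2 : ge (nf (paths n)) (nf (paths m))) by (apply ge_nf; apply (absorb Hfr H')).
  eapply Dtr. apply nf_paths. eapply Dtr. apply Dsym, G1. eapply Dtr. apply Dcomm.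
  eapply Dtr. apply G2. apply Dsym, nf_paths.
Qed.
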